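(* Let $\Omega_m$ be a finite set with $m\in\mathbb N$ elements and $v_0:2^{\Omega_m}\to[0,\infty)$ non-decreasing with $v_0(\emptyset)=0$, and suppose there is $g:\{1,\dots,m\}\to[0,\infty)$ with $v_0(A)=g(|A|)$ for all nonempty $A\subset\Omega_m$. Define $v_{n+1}(A)=\sup_{\mathcal I\in\Sigma}\mu_{v_n,\mathcal I}(A)$, $A\subset\Omega_m$, $n\ge0$. Then $v_2=v_1$, and $v_1$ is submodular.
   Context: $\Sigma$ denotes the set of all chains $\mathcal I\subset2^{\Omega_m}$ (totally ordered by inclusion) containing $\emptyset$ and $\Omega_m$ and generating $2^{\Omega_m}$ as a $\sigma$-algebra (equivalently, maximal chains of subsets). For non-decreasing $v$ and $\mathcal I\in\Sigma$, $\mu_{v,\mathcal I}$ is the unique measure on $2^{\Omega_m}$ with $\mu_{v,\mathcal I}(I)=v(I)$ for $I\in\mathcal I$. Non-decreasing means $v(A)\le v(B)$ for $A\subset B$; submodular means $v(A)+v(B)\ge v(A\cup B)+v(A\cap B)$. *)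

(* Defs.v *)
From HB Require Import structures.
From mathcomp Require Import all_boot all_order all_algebra.
From mathcomp Require Import classical_sets reals.
Set Implicit Arguments. Unset Strict Implicit. Unset Printing Implicit Defensive.
Import Order.TTheory GRing.Theory Num.Theory.
Local Open Scope ring_scope.

Definition nondecreasing_setfun (R : realType) (T : finType) (v : {set T} -> R) :=
  forall A B : {set T}, A \subset B -> v A <= v B.

Definition submodular_setfun (R : realType) (T : finType) (v : {set T} -> R) :=
  forall A B : {set T}, v (A :|: B) + v (A :&: B) <= v A + v B.

Definition is_chain (T : finType) (I : {set {set T}}) :=
  forall A B : {set T}, A \in I -> B \in I -> (A \subset B) || (B \subset A).

(* I generates 2^T as a sigma-algebra: every family containing I and closed
   under complement and (finite = countable, T finite) union is all of 2^T. *)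
Definition generates_powerset (T : finType) (I : {set {set T}}) :=
  forall F : {set {set T}}, I \subset F ->
    (forall A : {set T}, A \in F -> ~: A \in F) ->
    (forall A B : {set T}, A \in F -> B \in F -> A :|: B \in F) ->
    F = [set: {set T}].

Definition in_Sigma (T : finType) (I : {set {set T}}) :=
  [/\ is_chain I, finset.set0 \in I, [set: T] \in I & generates_powerset I].

Definition is_measure (R : realType) (T : finType) (mu : {set T} -> R) :=
  [/\ mu finset.set0 = 0, forall A : {set T}, 0 <= mu A &
      forall A B : {set T}, [disjoint A & B] -> mu (A :|: B) = mu A + mu B].

(* mu is "mu_{v,I}": a measure agreeing with v on the chain I
   (unique when it exists, e.g. for nondecreasing v). *)
Definition is_mu_v_I (R : realType) (T : finType) (v : {set T} -> R)
  (I : {set {set T}}) (mu : {set T} -> R) :=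
  is_measure mu /\ forall J : {set T}, J \in I -> mu J = v J.

Definition vnext (R : realType) (T : finType) (v : {set T} -> R) : {set T} -> R :=
  fun A => sup [set x : R | exists (I : {set {set T}}) (mu : {set T} -> R), [/\ in_Sigma I, is_mu_v_I v I mu & x = mu A]].

Fixpoint viter (R : realType) (T : finType) (v0 : {set T} -> R) (n : nat) : {set T} -> R :=
  match n with
  | O => v0
  | S k => vnext (viter v0 k)
  end.

(* Main.v *)
Require Import Defs.
From HB Require Import structures.
From mathcomp Require Import all_boot all_order all_algebra.
From mathcomp Require Import classical_sets reals.
From mathcomp Require Import fintype finset.
From mathcomp Require Import lra.
Set Implicit Arguments. Unset Strict Implicit. Unset Printing Implicit Defensive.
Import Order.TTheory GRing.Theory Num.Theory.
Local Open Scope ring_scope.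

Section S.
Variable T : finType.
Implicit Types (I : {set {set T}}) (A B J K : {set T}).

Lemma sep I x y : in_Sigma I -> x != y ->
  exists2 K, K \in I & (x \in K) != (y \in K).
Proof.
case=> _ _ _ gen xy.
case: (boolP [exists K in I, (x \in K) != (y \in K)]) => [/exists_inP[K KI H]|H].
  by exists K.
pose F : {set {set T}} := [set A : {set T} | (x \in A) == (y \in A)].
have sIF : I \subset F.
  apply/subsetP => K KI; rewrite inE; apply/negPn/negP => nK.
  by move/negP: H; apply; apply/exists_inP; exists K.
have E := gen F sIF.
have : [set x] \in F.
  rewrite E ?inE //.
    by move=> A; rewrite !inE => /eqP ->.
  by move=> A B; rewrite !inE => /eqP -> /eqP ->.
by rewrite !inE eqxx [y == x]eq_sym (negbTE xy).
Qed.

Lemma chain_card I K K' : is_chain I -> K \in I -> K' \in I -> #|K| = #|K'| -> K = K'.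
Proof.
move=> ch KI KI' e; case/orP: (ch _ _ KI KI') => s.
  by apply/eqP; rewrite eqEcard s e leqnn.
by apply/esym/eqP; rewrite eqEcard s e leqnn.
Qed.


Lemma consec I x : in_Sigma I ->
  exists J, [/\ J \in I, x \notin J & J :|: [set x] \in I].
Proof.
move=> Sig; case: (Sig) => ch I0 IT _.
have P0 : (finset.set0 \in I) && (x \notin finset.set0) by rewrite I0 inE.
case: (@arg_maxnP _ finset.set0 (fun K => (K \in I) && (x \notin K)) (fun K => #|K|) P0)
  => J /andP[JI xJ] Jmax.
have P1 : ([set: T] \in I) && (x \in [set: T]) by rewrite IT inE.
case: (@arg_minnP _ [set: T] (fun K => (K \in I) && (x \in K)) (fun K => #|K|) P1)
  => J' /andP[JI' xJ'] Jmin.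
have subJ : forall K, K \in I -> x \notin K -> K \subset J.
  move=> K KI xK; case/orP: (ch _ _ KI JI) => // s.
  have := Jmax K; rewrite KI xK => /(_ isT) le.
  suff -> : K = J by [].
  by apply/esym/eqP; rewrite eqEcard s; exact: le.
have supJ : forall K, K \in I -> x \in K -> J' \subset K.
  move=> K KI xK; case/orP: (ch _ _ KI JI') => // s.
  have := Jmin K; rewrite KI xK => /(_ isT) le.
  suff -> : K = J' by [].
  by apply/eqP; rewrite eqEcard s; exact: le.
have JJ' : J \subset J'.
  case/orP: (ch _ _ JI JI') => // s.
  by move/subsetP: s => /(_ x xJ'); rewrite (negbTE xJ).
exists J; split => //.
suff -> : J :|: [set x] = J' by [].
apply/eqP; rewrite eqEsubset; apply/andP; split.
  by rewrite subUset JJ' sub1set xJ'.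
apply/subsetP => y yJ'; rewrite !inE.
case: (eqVneq y x) => [->|yx]; first by rewrite orbT.
have [K KI] := sep Sig yx.
case xK: (x \in K) => /= yK.
  by move/subsetP: (supJ K KI xK) => /(_ y yJ'); move: yK; case: (y \in K).
have : y \in K by move: yK; case: (y \in K).
by move/(subsetP (subJ K KI (negbT xK))) => ->.
Qed.

Variable R : realType.

Lemma mu_sum (mu : {set T} -> R) A : is_measure mu ->
  mu A = \sum_(x in A) mu [set x].
Proof.
case=> mu0 _ muU.
suff H : forall s : seq T, uniq s -> mu [set x in s] = \sum_(x <- s) mu [set x].
  by rewrite -big_enum -H ?enum_uniq //; congr mu; apply/setP => y; rewrite !inE mem_enum.
elim=> [|a s IH] /=.
  by move=> _; rewrite big_nil -mu0; congr mu; apply/setP => y; rewrite !inE.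
case/andP=> nas us; rewrite big_cons -IH //.
have -> : [set x in a :: s] = [set a] :|: [set x in s].
  by apply/setP => y; rewrite !inE.
apply: muU; rewrite disjoints1 inE //.
Qed.

Lemma card_add x J : x \notin J -> #|J :|: [set x]| = #|J|.+1.
Proof. by move=> xJ; rewrite setUC cardsU1 xJ. Qed.

Lemma mu_struct I (mu v : {set T} -> R) (h : nat -> R) :
  in_Sigma I -> is_mu_v_I v I mu -> (forall A, v A = h #|A|) ->
  exists rk : T -> nat, [/\ injective rk, forall x, (rk x < #|T|)%N &
    forall A, mu A = \sum_(x in A) (h (rk x).+1 - h (rk x))].
Proof.
move=> Sig [meas muv] vh; case: (Sig) => ch _ _ _.
pose Jx x := odflt finset.set0 [pick J | [&& J \in I, x \notin J & J :|: [set x] \in I]].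
have JxP : forall x, [/\ Jx x \in I, x \notin Jx x & Jx x :|: [set x] \in I].
  move=> x; rewrite /Jx; case: pickP => [J /and3P[] //|].
  have [J [JI xJ JxI]] := consec x Sig.
  by move/(_ J); rewrite JI xJ JxI.
exists (fun x => #|Jx x|); split.
- move=> x y e; apply/eqP/negP => /negP xy.
  case: (JxP x) => JI xJ JxI; case: (JxP y) => JI' yJ JyI.
  have E1 := chain_card ch JI JI' e.
  have E2 := chain_card ch JxI JyI; rewrite !card_add // e in E2.
  have : x \in Jx y :|: [set y] by rewrite -E2 // !inE eqxx orbT.
  by rewrite !inE (negbTE xy) orbF -E1 (negbTE xJ).
- move=> x; case: (JxP x) => _ xJ _.
  by rewrite -ltnS -(card_add xJ) ltnS max_card.
- move=> A; rewrite (mu_sum _ meas); apply: eq_bigr => x _.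
  case: (JxP x) => JI xJ JxI.
  case: (meas) => _ _ muU.
  have D : [disjoint Jx x & [set x]] by rewrite disjoint_sym disjoints1.
  move: (muU _ _ D); rewrite (muv _ JxI) (muv _ JI) !vh card_add // => ->.
  by rewrite [h _ + _]addrC addrK.
Qed.

Lemma rearr (d : nat -> R) n (s K : seq nat) :
  perm_eq s (iota 0 n) -> sorted (fun a b => d b <= d a) s -> uniq K ->
  all (fun i => i < n)%N K ->
  \sum_(i <- K) d i <= \sum_(i <- take (size K) s) d i.
Proof.
move=> ps ss uK aK.
have us : uniq s by rewrite (perm_uniq ps) iota_uniq.
have sz : size s = n by rewrite (perm_size ps) size_iota.
have ms : forall i, (i \in s) = (i < n)%N by move=> i; rewrite (perm_mem ps) mem_iota.
have [K0|jpos] := posnP (size K).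
  by rewrite (size0nil K0) take0 !big_nil.
set j := size K in jpos *.
have jn : (j <= n)%N.
  rewrite -sz; apply: uniq_leq_size => // i iK; rewrite ms; exact: (allP aK).
set P := take j s.
have uP : uniq P := take_uniq _ us.
have szP : size P = j by rewrite size_takel // sz.
pose c := d (nth 0%N s j.-1).
have ltT : transitive (fun a b => d b <= d a).
  by move=> y x z h1 h2; exact: le_trans h2 h1.
have srt := sorted_leq_nth ltT (fun a => le_refl (d a)) 0%N ss.
have j1 : (j.-1 < size s)%N by rewrite sz (leq_trans _ jn) // prednK.
have Ha : forall i, i \in K -> i \notin P -> d i <= c.
  move=> i iK iP.
  have is_ : i \in s by rewrite ms; exact: (allP aK).
  have pj : (j.-1 <= index i s)%N.
    apply: leq_trans (leq_pred j) _; rewrite leqNgt; apply/negP => pl.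
    move/negP: iP; apply.
    by rewrite -(nth_index 0%N is_) -(nth_take 0%N pl) mem_nth // szP.
  have := srt _ _ j1 _ pj; rewrite nth_index //; apply; rewrite inE index_mem //.
have Hb : forall i, i \in P -> c <= d i.
  move=> i iP.
  have q : (index i P < j)%N by rewrite -szP index_mem.
  have qj : (index i P <= j.-1)%N by rewrite -ltnS prednK.
  have := srt _ _ _ j1 qj; rewrite -(nth_take 0%N q) nth_index //; apply.
  by rewrite inE sz (leq_trans q).
rewrite (bigID (fun i => i \in P)) [X in _ <= X](bigID (fun i => i \in K)) /=.
have -> : \sum_(i <- K | i \in P) d i = \sum_(i <- P | i \in K) d i.
  rewrite -[LHS]big_filter -[RHS]big_filter; apply: perm_big; apply: uniq_perm; rewrite ?filter_uniq //.
  by move=> i; rewrite !mem_filter andbC.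
rewrite lerD2l.
have cnt : count (fun i => i \notin P) K = count (fun i => i \notin K) P.
  have e1 := count_predC (fun i => i \in P) K.
  have e2 := count_predC (fun i => i \in K) P.
  have e3 : count (fun i => i \in P) K = count (fun i => i \in K) P.
    rewrite -!size_filter; apply: perm_size; apply: uniq_perm; rewrite ?filter_uniq //.
    by move=> i; rewrite !mem_filter andbC.
  rewrite szP in e2.
  have e4 : count (predC (fun i => i \in P)) K = count (fun i => i \notin P) K by [].
  have e5 : count (predC (fun i => i \in K)) P = count (fun i => i \notin K) P by [].
  rewrite -e4 -e5; apply/eqP; rewrite -(eqn_add2l (count (fun i => i \in P) K)).
  by rewrite e1 e3 e2.
apply: (@le_trans _ _ (c *+ count (fun i => i \notin P) K)).
  rewrite -iter_addr_0 -big_const_seq [X in X <= _]big_seq_cond [X in _ <= X]big_seq_cond.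
  by apply: ler_sum => i /andP[iK iP]; apply: Ha.
rewrite cnt -iter_addr_0 -big_const_seq [X in X <= _]big_seq_cond [X in _ <= X]big_seq_cond.
by apply: ler_sum => i /andP[iP _]; apply: Hb.
Qed.

Lemma attain (v : {set T} -> R) (h : nat -> R) (s : seq nat) A :
  (forall B, v B = h #|B|) -> h 0%N = 0 -> (forall k, (k < #|T|)%N -> h k <= h k.+1) ->
  perm_eq s (iota 0 #|T|) ->
  exists I mu, [/\ in_Sigma I, is_mu_v_I v I mu &
     mu A = \sum_(i <- take #|A| s) (h i.+1 - h i)].
Proof.
move=> vh h0 hinc ps.
set n := #|T|.
have us : uniq s by rewrite (perm_uniq ps) iota_uniq.
have sz : size s = n by rewrite (perm_size ps) size_iota.
have ms : forall i, (i \in s) = (i < n)%N by move=> i; rewrite (perm_mem ps) mem_iota.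
pose L := enum A ++ enum (~: A).
have uL : uniq L.
  rewrite cat_uniq !enum_uniq /= andbT; apply/hasPn => x.
  by rewrite !mem_enum inE => ->.
have mL : forall x, x \in L by move=> x; rewrite mem_cat !mem_enum inE orbN.
have szL : size L = n by rewrite size_cat -!cardE cardsC.
have pL : perm_eq L (enum T) by apply: uniq_perm; rewrite ?enum_uniq // => x; rewrite mem_enum mL.
pose r x := nth 0%N s (index x L).
have mapr : map r L = s.
  apply: (@eq_from_nth _ 0%N); first by rewrite size_map szL sz.
  move=> i; rewrite size_map => iL.
  have : (0 < #|T|)%N by rewrite -/n -szL (leq_ltn_trans _ iL).
  case/card_gt0P => x0 _.
  by rewrite (nth_map x0) // /r index_uniq.
have rn : forall x, (r x < n)%N by move=> x; rewrite -ms mem_nth // sz -szL index_mem.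
have rinj : injective r.
  move=> x y e.
  have : index (r x) s = index (r y) s by rewrite e.
  rewrite /r !index_uniq ?sz -?szL ?index_mem // => e'.
  by rewrite -(nth_index x (mL x)) e' nth_index.
have sumC : forall (F : nat -> R) k, (k <= n)%N ->
    \sum_(x in [set x | (r x < k)%N]) F (r x) = \sum_(i < k) F i.
  move=> F k kn.
  rewrite -big_enum (perm_big (filter (fun x => (r x < k)%N) L)); last first.
    apply: uniq_perm; rewrite ?enum_uniq ?filter_uniq // => x.
    by rewrite mem_enum mem_filter inE mL andbT.
  rewrite big_filter -(big_map r (fun i => (i < k)%N) F) mapr (perm_big _ ps).
  rewrite -(big_mkord xpredT) (big_nat_widen _ _ _ _ _ kn) /index_iota subn0.
  by [].
pose C k := [set x | (r x < k)%N].
have cardC : forall k, (k <= n)%N -> #|C k| = k.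
  move=> k kn; have := sumC (fun _ => 1 : R) k kn.
  rewrite !sumr_const card_ord => /eqP; rewrite eqr_nat => /eqP.
  by rewrite /C.
have sumA : forall F : nat -> R, \sum_(x in A) F (r x) = \sum_(i <- take #|A| s) F i.
  move=> F; rewrite -mapr -map_take take_size_cat ?cardE // big_map big_enum.
  by [].
pose I := [set C (val k) | k : 'I_n.+1].
have memC : forall k, (k <= n)%N -> C k \in I.
  by move=> k kn; apply/imsetP; exists (Ordinal (kn : (k < n.+1)%N)).
have memI : forall K, K \in I -> exists2 k, (k <= n)%N & K = C k.
  by move=> K /imsetP[k _ ->]; exists (val k) => //; rewrite -ltnS; exact: ltn_ord.
pose mu B := \sum_(x in B) (h (r x).+1 - h (r x)).
exists I, mu; split.
- split.
  + move=> K K' /memI[i _ ->] /memI[j _ ->]; case: (leqP i j) => ij; apply/orP;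
      [left | right]; apply/subsetP => x; rewrite !inE => lt.
      exact: leq_trans lt ij.
    exact: ltn_trans lt ij.
  + have -> : finset.set0 = C 0%N by apply/setP => x; rewrite !inE.
    exact: memC.
  + have -> : [set: T] = C n by apply/setP => x; rewrite !inE rn.
    exact: memC.
  + move=> F sIF cC cU.
    have FC : forall k, (k <= n)%N -> C k \in F.
      by move=> k kn; apply: (subsetP sIF); apply: memC.
    have F1 : forall x, [set x] \in F.
      move=> x; have -> : [set x] = ~: (~: C (r x).+1 :|: C (r x)).
        apply/setP => y; rewrite !inE negb_or negbK -leqNgt ltnS -eqn_leq.
        by rewrite (inj_eq rinj).
      by apply: (cC); apply: (cU); [apply: (cC); apply: FC | apply: FC; apply: ltnW].
    have Fs : forall q : seq T, [set x in q] \in F.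
      elim => [|a q IH].
        have -> : [set x in [::]] = C 0%N by apply/setP => y; rewrite !inE.
        exact: FC.
      have -> : [set x in a :: q] = [set a] :|: [set x in q].
        by apply/setP => y; rewrite !inE.
      exact: (cU).
    apply/setP => K; rewrite inE.
    have -> : K = [set x in enum K] by apply/setP => y; rewrite inE mem_enum.
    exact: Fs.
- split; first split.
  + by rewrite /mu big_set0.
  + by move=> B; apply: sumr_ge0 => x _; rewrite subr_ge0 hinc.
  + by move=> B B' dis; rewrite /mu -bigU //; apply: eq_bigl => x; rewrite !inE.
  + move=> J /memI[k kn ->]; rewrite vh cardC // /mu /C (sumC (fun i => h i.+1 - h i)) //.
    by rewrite -(big_mkord xpredT (fun i => h i.+1 - h i)) telescope_sumr // h0 subr0.
- exact: sumA.
Qed.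

Definition Top (d : nat -> R) n j :=
  \sum_(i <- take j (sort (fun a b => d b <= d a) (iota 0 n))) d i.

Lemma sup_max (E : set R) x :
  E x -> (forall y, E y -> y <= x) -> sup E = x.
Proof.
move=> Ex ub; apply/le_anti/andP; split.
  by apply: ge_sup; [exists x | move=> y /ub].
by apply: (ub_le_sup); [exists x => y /ub | ].
Qed.

Lemma vnext_card (v : {set T} -> R) h :
  (forall B, v B = h #|B|) -> h 0%N = 0 -> (forall k, (k < #|T|)%N -> h k <= h k.+1) ->
  forall A, vnext v A = Top (fun k => h k.+1 - h k) #|T| #|A|.
Proof.
move=> vh h0 hinc A.
pose d k := h k.+1 - h k.
have ps : perm_eq (sort (fun a b => d b <= d a) (iota 0 #|T|)) (iota 0 #|T|).
  by rewrite perm_sort perm_refl.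
have ss : sorted (fun a b => d b <= d a) (sort (fun a b => d b <= d a) (iota 0 #|T|)).
  by apply: sort_sorted => a b; exact: le_total.
apply: sup_max.
  have [I [mu [Sig Imu muA]]] := attain A vh h0 hinc ps.
  by exists I, mu; split.
move=> y [I [mu [Sig Imu ->]]].
have [rk [rinj rn muE]] := mu_struct Sig Imu vh.
rewrite muE -big_enum -(big_map rk xpredT d).
have -> : #|A| = size (map rk (enum A)) by rewrite size_map cardE.
apply: rearr ps ss _ _.
  by rewrite map_inj_uniq ?enum_uniq.
by apply/allP => i /mapP[x _ ->].
Qed.

Lemma iota_sorted (r : rel nat) m n : (forall i, r i i.+1) -> sorted r (iota m n).
Proof.
move=> H; case: n => [//|n] /=; elim: n m => [//|n IH] m /=.
by rewrite H IH.
Qed.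

Section TopProps.
Variables (d : nat -> R) (n : nat).
Hypothesis d0 : forall i, (i < n)%N -> 0 <= d i.
Let s := sort (fun a b => d b <= d a) (iota 0 n).
Let e k := Top d n k.+1 - Top d n k.

Lemma Top0 : Top d n 0 = 0.
Proof. by rewrite /Top take0 big_nil. Qed.

Lemma eE k : e k = if (k < n)%N then d (nth 0%N s k) else 0.
Proof.
have ps : perm_eq s (iota 0 n) by rewrite perm_sort perm_refl.
have sz : size s = n by rewrite (perm_size ps) size_iota.
rewrite /e /Top -/s; case: ltnP => kn.
  by rewrite (take_nth 0%N) ?sz // -cats1 big_cat big_seq1 /= addrC addrK.
by rewrite !take_oversize ?sz // ?subrr // (leq_trans kn).
Qed.

Lemma e_ge0 k : 0 <= e k.
Proof.
rewrite eE; case: ltnP => // kn; apply: d0.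
have ps : perm_eq s (iota 0 n) by rewrite perm_sort perm_refl.
have sz : size s = n by rewrite (perm_size ps) size_iota.
have : nth 0%N s k \in iota 0 n by rewrite -(perm_mem ps) mem_nth ?sz.
by rewrite mem_iota.
Qed.

Lemma e_noninc k : e k.+1 <= e k.
Proof.
rewrite !eE; case: ltnP => kn; last by rewrite -(eE k) e_ge0.
rewrite ifT ?(ltn_trans _ kn) //.
have ps : perm_eq s (iota 0 n) by rewrite perm_sort perm_refl.
have sz : size s = n by rewrite (perm_size ps) size_iota.
have ss : sorted (fun a b => d b <= d a) s.
  by apply: sort_sorted => a b; exact: le_total.
have ltT : transitive (fun a b => d b <= d a).
  by move=> y x z h1 h2; exact: le_trans h2 h1.
apply: (sorted_leq_nth ltT (fun a => le_refl (d a)) 0%N ss); rewrite ?inE ?sz //.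
exact: ltn_trans kn.
Qed.

Lemma e_mono i j : (i <= j)%N -> e j <= e i.
Proof.
move=> ij; rewrite -(subnKC ij); elim: (j - i)%N => [|p IH]; first by rewrite addn0.
by rewrite addnS (le_trans (e_noninc _)).
Qed.

End TopProps.


End S.
Unset Implicit Arguments.
Unset Strict Implicit.

Theorem proposition23 (R : realType) (m : nat) (T : finType) (v0 : {set T} -> R)
  (g : nat -> R) :
  #|T| = m ->
  (forall A, 0 <= v0 A) ->
  nondecreasing_setfun v0 ->
  v0 finset.set0 = 0 ->
  (forall k, (1 <= k <= m)%N -> 0 <= g k) ->
  (forall A : {set T}, A != finset.set0 -> v0 A = g #|A|) ->
  (forall A, viter v0 2 A = viter v0 1 A) /\ submodular_setfun (viter v0 1).
Proof.
move=> cardT v0ge v0mono v00 gge v0g.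
pose h0 k := if k is 0 then 0 else g k.
have vh0 : forall B, v0 B = h0 #|B|.
  move=> B; case: (eqVneq B finset.set0) => [->|Bn]; first by rewrite cards0 v00.
  rewrite v0g //; move: Bn; rewrite -card_gt0; case: #|B| => //.
have hinc0 : forall k, (k < #|T|)%N -> h0 k <= h0 k.+1.
  move=> k kn.
  have cB : forall j, (j <= #|T|)%N -> #|[set x in take j (enum T)]| = j.
    move=> j jn; rewrite cardsE (card_uniqP (take_uniq _ (enum_uniq _))).
    by rewrite size_takel // -cardE.
  rewrite -{1}(cB k (ltnW kn)) -(cB k.+1 kn) -!vh0; apply: v0mono.
  apply/subsetP => x; rewrite !inE (take_nth x) ?mem_rcons ?inE -?cardE // => ->.
  by rewrite orbT.
have v1E := vnext_card vh0 (erefl _) hinc0.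
pose d0 k := h0 k.+1 - h0 k.
have d0ge : forall i, (i < #|T|)%N -> 0 <= d0 i by move=> i ilt; rewrite subr_ge0 hinc0.
pose h1 j := Top d0 #|T| j.
have vh1 : forall B, viter v0 1 B = h1 #|B| := v1E.
have hinc1 : forall k, (k < #|T|)%N -> h1 k <= h1 k.+1.
  by move=> k _; rewrite -subr_ge0; exact: (e_ge0 d0ge).
have v2E := vnext_card vh1 (Top0 _ _) hinc1.
pose e1 k := h1 k.+1 - h1 k.
have emono : forall i j, (i <= j)%N -> e1 j <= e1 i := e_mono d0ge.
split.
  move=> A; rewrite [LHS]v2E vh1.
  have jn : (#|A| <= #|T|)%N by apply: max_card.
  rewrite /Top sorted_sort; last first.
    by apply: iota_sorted => i; apply: emono.
    by move=> y x z h1' h2'; exact: le_trans h2' h1'.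
  rewrite take_iota (minn_idPl jn).
  have -> : iota 0 #|A| = index_iota 0 #|A| by rewrite /index_iota subn0.
  by rewrite telescope_sumr // /h1 Top0 subr0.
move=> A B; rewrite !vh1.
have conc : forall a b p, (a <= b)%N -> h1 (b + p)%N - h1 b <= h1 (a + p)%N - h1 a.
  move=> a b p ab; elim: p => [|p IH]; first by rewrite !addn0 !subrr.
  rewrite !addnS.
  have -> : h1 (b + p)%N.+1 - h1 b = (h1 (b + p)%N - h1 b) + e1 (b + p)%N by rewrite /e1; lra.
  have -> : h1 (a + p)%N.+1 - h1 a = (h1 (a + p)%N - h1 a) + e1 (a + p)%N by rewrite /e1; lra.
  by apply: lerD => //; apply: emono; rewrite leq_add2r.
have cUI := cardsUI A B.
set a := #|A :&: B| in cUI *.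
have aA : (a <= #|A|)%N by rewrite subset_leq_card // subsetIl.
have aB : (a <= #|B|)%N by rewrite subset_leq_card // subsetIr.
have := conc a (a + (#|B| - a))%N (#|A| - a)%N (leq_addr _ _).
rewrite !subnKC //.
have -> : (#|B| + (#|A| - a) = #|A :|: B|)%N.
  by apply/eqP; rewrite -(eqn_add2r a) -addnA subnK // cUI addnC.
move=> H; rewrite -/a; lra.
Qed.
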